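(* Let $G$ be a tree on vertex set $[n]$ and let $\mathrm{CIM}_G=\operatorname{conv}\left(c_\mathcal{G}\colon \mathcal{G}\text{ a DAG on }[n]\text{ with skeleton } G\right)$. Then $\operatorname{diam}(\mathrm{CIM}_G)$ is less than or equal to the number of internal vertices (non-leaf vertices) of $G$.
   Context: For a directed acyclic graph (DAG) $\mathcal{G}$ on vertex set $[n]=\{1,\dots,n\}$, the characteristic imset $c_\mathcal{G}$ is the 0/1-vector indexed by the subsets $S\subseteq[n]$ with $|S|\geq 2$, with $c_\mathcal{G}(S)=1$ if there exists $i\in S$ such that $S\subseteq \mathrm{pa}_\mathcal{G}(i)\cup\{i\}$ (where $\mathrm{pa}_\mathcal{G}(i)$ is the set of parents of $i$), and $c_\mathcal{G}(S)=0$ otherwise. The skeleton of a DAG is the undirected graph with the same vertices and adjacencies. For a polytope $P$, the vertex-edge graph $G(P)$ has the vertices of $P$ as nodes, with two vertices adjacent iff their convex hull is an edge of $P$; $\operatorname{diam}(P)$ is the maximum over pairs of vertices of the length of a shortest path between them in $G(P)$. *)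

(* Defs.v *)
From HB Require Import structures.
From mathcomp Require Import all_boot all_order all_algebra.
From mathcomp Require Import reals.
Set Implicit Arguments. Unset Strict Implicit. Unset Printing Implicit Defensive.
Import Order.TTheory GRing.Theory Num.Theory.
Local Open Scope ring_scope.

Definition simple_graph (n : nat) (G : rel 'I_n) : Prop :=
  (forall i j, G i j = G j i) /\ (forall i, ~~ G i i).

(* a tree: connected simple graph with n - 1 edges
   (edges counted as ordered pairs, hence 2 (n-1)); n >= 1 *)
Definition is_tree (n : nat) (G : rel 'I_n) : Prop :=
  (0 < n)%N /\ simple_graph G /\ (forall i j, connect G i j) /\
  #|[set p : 'I_n * 'I_n | G p.1 p.2]| = (2 * (n - 1))%N.

Definition degree (n : nat) (G : rel 'I_n) (v : 'I_n) : nat :=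
  #|[set w | G v w]|.

Definition internal_vertices (n : nat) (G : rel 'I_n) : nat :=
  #|[set v | (1 < degree G v)%N]|.

(* D i j means the arrow i -> j *)
Definition is_dag (n : nat) (D : rel 'I_n) : Prop :=
  forall i j, D i j -> ~~ connect D j i.

Definition has_skeleton (n : nat) (D G : rel 'I_n) : Prop :=
  forall i j, G i j = D i j || D j i.

Definition parents (n : nat) (D : rel 'I_n) (i : 'I_n) : {set 'I_n} :=
  [set j | D j i].

Definition cim_index (n : nat) := {S : {set 'I_n} | (1 < #|S|)%N}.

Definition cim_value (n : nat) (D : rel 'I_n) (S : {set 'I_n}) : bool :=
  [exists i in S, S \subset i |: parents D i].

Definition char_imset (R : realType) (n : nat) (D : rel 'I_n)
  : {ffun cim_index n -> R} :=
  [ffun S => (cim_value D (val S))%:R].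

Definition CIM_points (R : realType) (n : nat) (G : rel 'I_n)
  (p : {ffun cim_index n -> R}) : Prop :=
  exists D : rel 'I_n, [/\ is_dag D, has_skeleton D G & p = char_imset R D].

Section Polytope.
Variables (R : realType) (I : finType).
Implicit Types (V : {ffun I -> R} -> Prop) (c u v w : {ffun I -> R}).

Definition dotp c w : R := \sum_(i : I) c i * w i.

(* v is a vertex of conv(V): v in V and some linear functional is uniquely
   maximized at v over V (equivalently over conv(V)) *)
Definition poly_vertex V v : Prop :=
  V v /\ exists c, forall w, V w -> w <> v -> dotp c w < dotp c v.

(* conv{u,v} is an edge of conv(V): u <> v are vertices and for some linear
   functional the face of conv(V) maximizing it is exactly the segment [u,v]
   (the maximizers in V all lie in the segment, u and v being maximizers) *)
Definition poly_edge V u v : Prop :=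
  [/\ poly_vertex V u, poly_vertex V v, u <> v &
   exists c, dotp c u = dotp c v /\
     forall w, V w -> dotp c w <= dotp c u /\
       (dotp c w = dotp c u ->
        exists t : R, [/\ 0 <= t, t <= 1 & forall i, w i = t * u i + (1 - t) * v i])].

Fixpoint within_dist V (k : nat) u v : Prop :=
  match k with
  | 0 => u = v
  | k'.+1 => u = v \/ exists w, poly_edge V u w /\ within_dist V k' w v
  end.

Definition diam_le V (k : nat) : Prop :=
  forall u v, poly_vertex V u -> poly_vertex V v -> within_dist V k u v.

End Polytope.

(* Main.v *)
Require Import Defs.
From mathcomp Require Import all_boot all_order all_algebra.
From mathcomp Require Import reals zify lra.
From Stdlib Require Import Classical.
Set Implicit Arguments. Unset Strict Implicit. Unset Printing Implicit Defensive.
Import Order.TTheory GRing.Theory Num.Theory.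

Section Count.
Variables (T : finType) (e : rel T) (r : T).
Hypothesis esym : forall x y, e x y = e y x.
Hypothesis conn : forall v, connect e v r.

Definition Pk (v : T) (k : nat) : bool :=
  [exists p : k.-tuple T, path e v p && (last v p == r)].

Lemma Pk_ex v : exists k, Pk v k.
Proof.
case/connectP: (conn v) => p pp lp.
exists (size p); apply/existsP; exists (in_tuple p) => /=.
by rewrite pp -lp eqxx.
Qed.

Definition dist v := ex_minn (Pk_ex v).

Lemma dist_next v : v != r -> exists h, e v h && (dist h < dist v).
Proof.
move=> vr; rewrite /dist; case: ex_minnP => m /existsP[p /andP[pp /eqP lp]] _.
case: p pp lp => [[|h s] /= sz] //.
  by move=> _ lp; rewrite lp eqxx in vr.
move=> /andP[evh ps] ls; exists h; rewrite evh /=.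
case: ex_minnP => k _ mk.
have : Pk h (size s).
  by apply/existsP; exists (in_tuple s) => /=; rewrite ps ls eqxx.
move/mk; rewrite -(eqP sz) /=.
done.
Qed.

Definition nxt v := odflt v [pick h | e v h && (dist h < dist v)].

Lemma nxtP v : v != r -> e v (nxt v) && (dist (nxt v) < dist v).
Proof.
move=> vr; rewrite /nxt; case: pickP => [h //|H].
by case: (dist_next vr) => h; rewrite H.
Qed.

Lemma count_edges : (2 * (#|T| - 1) <= #|[set p : T * T | e p.1 p.2]|)%N.
Proof.
set A := [set v | v != r].
have cA : #|A| = (#|T| - 1)%N.
  by rewrite subn1 -(cardsC1 r); apply: eq_card => v; rewrite !inE.
pose f1 := fun v => (v, nxt v).
pose f2 := fun v => (nxt v, v).
have i1 : injective f1 by move=> x y [].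
have i2 : injective f2 by move=> x y [].
have dis : [disjoint f1 @: A & f2 @: A].
  apply/pred0P => p /=; apply/negbTE/negP => /andP[/imsetP[x xA ->] /imsetP[y yA [ex ey]]].
  rewrite !inE in xA yA.
  move: (nxtP xA) (nxtP yA) => /andP[_ h1] /andP[_ h2].
  rewrite -ex -ey in h1 h2.
  by move: (ltn_trans h1 h2); rewrite ltnn.
have sub : f1 @: A :|: f2 @: A \subset [set p : T * T | e p.1 p.2].
  apply/subsetP => p /setUP[] /imsetP[x xA ->]; rewrite inE /=;
  rewrite inE in xA; case/andP: (nxtP xA) => // h _; by rewrite esym.
have := subset_leq_card sub.
rewrite cardsU (disjoint_setI0 dis) cards0 subn0.
by rewrite !card_imset // cA mul2n -addnn.
Qed.
End Count.

Lemma tree_tri n (G : rel 'I_n) : is_tree G ->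
  forall a b c, G a b -> G b c -> G a c -> False.
Proof.
case=> n0 [[Gs Gi] [Gc Ge]] a b c ab bc ac.
have nab : a != b by apply/eqP => eab; rewrite eab (negbTE (Gi b)) in ab.
have ncb : c != b by apply/eqP => e1; rewrite e1 (negbTE (Gi b)) in bc.
have nca : c != a by apply/eqP => e1; rewrite e1 (negbTE (Gi a)) in ac.
pose G' := fun i j : 'I_n => G i j && ~~ (((i == a) && (j == b)) || ((i == b) && (j == a))).
have G's : forall x y, G' x y = G' y x.
  by move=> x y; rewrite /G' Gs; case: (x == a); case: (y == b); case: (x == b); case: (y == a).
have G'ac : G' a c by rewrite /G' ac eqxx (negbTE ncb) (negbTE nab).
have G'cb : G' c b by rewrite /G' (Gs c) bc (negbTE nca) (negbTE ncb).
have G'c : forall v, connect G' v a.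
  move=> v; suff sub : subrel G (connect G') by exact: connect_sub sub _ _ (Gc v a).
  move=> x y Gxy.
  case: (boolP (((x == a) && (y == b)) || ((x == b) && (y == a)))) => [/orP[]|H].
  - by case/andP => /eqP -> /eqP ->; apply: (connect_trans (connect1 G'ac) (connect1 G'cb)).
  - by case/andP => /eqP -> /eqP ->; rewrite G's in G'cb; rewrite G's in G'ac;
      apply: (connect_trans (connect1 G'cb) (connect1 G'ac)).
  - by apply: connect1; rewrite /G' Gxy H.
have := count_edges G's G'c.
have E1 : [set p : 'I_n * 'I_n | G p.1 p.2] = [set p : 'I_n * 'I_n | G' p.1 p.2] :|: [set (a, b); (b, a)].
  apply/setP => -[x y]; rewrite !inE /= /G' !xpair_eqE /=.
  case: (boolP ((x == a) && (y == b))) => [/andP[/eqP -> /eqP ->]|]; first by rewrite ab.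
  case: (boolP ((x == b) && (y == a))) => [/andP[/eqP -> /eqP ->]|]; first by rewrite (Gs b) ab.
  by rewrite !andbT !orbF.
rewrite E1 cardsU in Ge.
have E2 : [set p : 'I_n * 'I_n | G' p.1 p.2] :&: [set (a, b); (b, a)] = set0.
  apply/setP => -[x y]; rewrite !inE /= /G' !xpair_eqE /=.
  by case: (x == a); case: (y == b); case: (x == b); case: (y == a); rewrite ?andbF.
rewrite E2 cards0 subn0 cards2 xpair_eqE (negbTE nab) /= in Ge.
rewrite card_ord; move=> H; rewrite -Ge in H; move: H; rewrite leqNgt; apply/negP/negPn; by rewrite addn2.
Qed.

Section Dag.
Variables (n : nat) (G : rel 'I_n).
Hypothesis Gs : forall i j, G i j = G j i.
Hypothesis Gi : forall i, ~~ G i i.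
Hypothesis Gtri : forall a b c, G a b -> G b c -> G a c -> False.

Definition Nb x := [set y | G x y].
Definition data (D : rel 'I_n) x : {set 'I_n} :=
  if (1 < #|parents D x|)%N then parents D x else set0.

Lemma pa_sub D x : has_skeleton D G -> parents D x \subset Nb x.
Proof.
move=> sk; apply/subsetP => y; rewrite !inE => Dyx.
by rewrite Gs sk Dyx.
Qed.

Lemma data_cases D x : data D x = set0 \/ ((1 < #|data D x|)%N /\ data D x = parents D x).
Proof. by rewrite /data; case: ifP => h; [right | left]. Qed.

Lemma data_sub D x : has_skeleton D G -> data D x \subset Nb x.
Proof.
move=> sk; case: (data_cases D x) => [->|[_ ->]]; [exact: sub0set | exact: pa_sub].
Qed.

Lemma cim_imp D1 D2 (S : {set 'I_n}) : has_skeleton D1 G -> has_skeleton D2 G ->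
  (forall x, data D1 x = data D2 x) -> (1 < #|S|)%N ->
  cim_value D1 S -> cim_value D2 S.
Proof.
move=> sk1 sk2 ed S2 /existsP[i /andP[iS sub]].
apply/existsP.
case: (boolP (1 < #|parents D1 i|)%N) => hp.
  have e1 : data D1 i = parents D1 i by rewrite /data hp.
  have e2 : data D2 i = parents D1 i.
    rewrite -ed e1 //.
  case: (data_cases D2 i) => [h|[_ h]].
    by move: hp; rewrite -e2 h cards0.
  by exists i; rewrite iS -h e2.
have [j [jS ji]] : exists j, j \in S /\ j != i.
  case/card_gt1P: S2 => x [y [xS yS xy]].
  case: (eqVneq x i) => [exi|nxi]; last by exists x.
  by exists y; split => //; rewrite -exi eq_sym.
have jpa : j \in parents D1 i.
  by move/subsetP: sub => /(_ j jS); rewrite !inE (negbTE ji).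
have ks : forall k, k \in S -> k = i \/ k = j.
  move=> k kS; move/subsetP: sub => /(_ k kS); rewrite !inE.
  case/orP => [/eqP -> | kpa]; first by left.
  right; move: hp; rewrite -leqNgt => /card_le1_eqP H.
  have kpa' : k \in parents D1 i by rewrite inE.
  by have := H k j kpa' jpa.
have : G j i by rewrite sk1; move: jpa; rewrite inE => ->.
rewrite sk2 => /orP[] h.
- exists i; rewrite iS; apply/subsetP => k /ks [->|->]; rewrite !inE ?eqxx //.
  by rewrite h orbT.
- exists j; rewrite jS; apply/subsetP => k /ks [->|->]; rewrite !inE ?eqxx //.
  by rewrite h orbT.
Qed.

Lemma cim_eq D1 D2 (S : {set 'I_n}) : has_skeleton D1 G -> has_skeleton D2 G ->
  (forall x, data D1 x = data D2 x) -> (1 < #|S|)%N ->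
  cim_value D1 S = cim_value D2 S.
Proof.
move=> sk1 sk2 ed S2; apply/idP/idP; first exact: cim_imp.
by apply: cim_imp => // x; rewrite ed.
Qed.

Lemma cim_local D x (T : {set 'I_n}) : has_skeleton D G -> T \subset Nb x -> (1 < #|T|)%N ->
  cim_value D (x |: T) = (T \subset data D x).
Proof.
move=> sk TN T2; have xT : x \notin T.
  by apply/negP => /(subsetP TN); rewrite inE (negbTE (Gi x)).
apply/idP/idP.
  case/existsP => i /andP[]; rewrite in_setU1 => /orP[/eqP ->|iT] sub.
    have Tpa : T \subset parents D x.
      apply/subsetP => t tT; move/subsetP: sub => /(_ t); rewrite !inE tT orbT.
      move=> /(_ isT) /orP[/eqP ext|] //.
      by move: xT; rewrite -ext tT.
    rewrite /data; have -> : (1 < #|parents D x|)%N by apply: leq_trans T2 (subset_leq_card Tpa).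
    done.
  exfalso.
  have [j [jT ji]] : exists j, j \in T /\ j != i.
    case/card_gt1P: T2 => a [b [aT bT ab]].
    case: (eqVneq a i) => [eai|nai]; last by exists a.
    by exists b; split => //; rewrite -eai eq_sym.
  have : j \in parents D i.
    by move/subsetP: sub => /(_ j); rewrite !inE jT orbT (negbTE ji) => /(_ isT).
  rewrite inE => Dji.
  have Gij : G i j by rewrite Gs sk Dji.
  have Gxi : G x i by move/subsetP: TN => /(_ i iT); rewrite inE.
  have Gxj : G x j by move/subsetP: TN => /(_ j jT); rewrite inE.
  exact: (Gtri Gxi Gij Gxj).
move=> Td; apply/existsP; exists x; rewrite setU11 /=.
case: (data_cases D x) => [h|[_ h]].
  by move: Td; rewrite h subset0 => /eqP TT; rewrite TT cards0 in T2.
by rewrite setUS // -h.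
Qed.

End Dag.

Section RingPart0.
Local Open Scope ring_scope.

Lemma sum_lt (R : realDomainType) (I : finType) (F G : I -> R) :
  (forall i, F i <= G i) -> (exists i, F i < G i) -> \sum_i F i < \sum_i G i.
Proof.
move=> le [i lt]; rewrite (bigD1 i) //= [X in _ < X](bigD1 i) //=.
by apply: ltr_leD => //; apply: ler_sum.
Qed.

Lemma sum_eq_le (R : realDomainType) (I : finType) (F G : I -> R) :
  (forall i, F i <= G i) -> \sum_i F i = \sum_i G i -> forall i, F i = G i.
Proof.
move=> le eq i; apply/eqP; rewrite eq_le le /=; rewrite leNgt; apply/negP => lt.
have := sum_lt le (ex_intro _ i lt); by rewrite eq ltxx.
Qed.

Definition bvec (R : realType) (I : finType) (f : I -> bool) : {ffun I -> R} :=
  [ffun i => (f i)%:R].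

Lemma bvec_vertex (R : realType) (I : finType) (V : {ffun I -> R} -> Prop) (g : I -> bool) :
  (forall w, V w -> exists f, w = bvec R f) -> V (bvec R g) -> poly_vertex V (bvec R g).
Proof.
move=> Vb Vg; split => //.
exists [ffun i => 2 * (g i)%:R - 1] => w Vw nw.
case: (Vb w Vw) => f wf; subst w.
rewrite /dotp; apply: sum_lt => [i|].
  by rewrite !ffunE; case: (f i); case: (g i) => /=; lra.
have [i fi] : exists i, f i != g i.
  case: (boolP [exists i, f i != g i]) => [/existsP //|/existsPn H].
  exfalso; apply: nw; apply/ffunP => i; rewrite !ffunE.
  by move: (H i) => /negPn/eqP ->.
by exists i; rewrite !ffunE; move: fi; case: (f i); case: (g i) => //= _; lra.
Qed.

End RingPart0.

Section RingPart1.
Local Open Scope ring_scope.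

Lemma mobius (R : pzRingType) (T : finType) (S L : {set T}) :
  \sum_(X : {set T} | (S \subset X) && (X \subset L)) (-1) ^+ #|X :\: S| = (S == L)%:R :> R.
Proof.
case: (boolP (S \subset L)) => SL; last first.
  rewrite big1 => [|X /andP[SX XL]]; last by rewrite (subset_trans SX XL) in SL.
  by case: eqP => // eSL; rewrite eSL subxx in SL.
case: (eqVneq S L) => [<-|nSL].
  rewrite (big_pred1 S) ?setDv ?cards0 ?expr0 // => X /=.
  by rewrite eqEsubset andbC.
have [z zL zS] : exists2 z, z \in L & z \notin S.
  case: (boolP [exists z, (z \in L) && (z \notin S)]) => [/existsP[z /andP[]]|/existsPn H].
    by exists z.
  exfalso; move/negP: nSL; apply; rewrite eqEsubset SL /=; apply/subsetP => z zL.
  by move: (H z); rewrite zL /= negbK.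
rewrite (bigID (fun X : {set T} => z \in X)) /=.
rewrite (reindex_onto (fun X => z |: X) (fun X => X :\ z)) /=; last first.
  by move=> X /andP[_ zX]; rewrite setD1K.
have Ssub : forall j : {set T}, z \notin j -> (S \subset z |: j) = (S \subset j).
  move=> j zj; apply/idP/idP => H; last by apply: subset_trans H (subsetUr _ _).
  apply/subsetP => y yS; move/subsetP: H => /(_ y yS); rewrite in_setU1.
  case/orP => // /eqP eyz; by rewrite -eyz yS in zS.
rewrite (eq_bigl (fun j : {set T} => (S \subset j) && (j \subset L) && (z \notin j))); last first.
  move=> j /=; case: (boolP (z \in j)) => zj /=.
    have -> : (z |: j) :\ z == j = false.
      by apply/negbTE/negP => /eqP ej; move: zj; rewrite -ej setD11.
    by rewrite !andbF.
  by rewrite setU1K // eqxx setU11 Ssub // subUset sub1set zL !andbT.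
rewrite -big_split /= big1 // => j /andP[_ zj].
have -> : (z |: j) :\: S = z |: (j :\: S).
  rewrite setDUl; congr (_ :|: _); apply/setP => y; rewrite !inE.
  by case: (eqVneq y z) => [->|]; rewrite ?eqxx ?(negbTE zS) ?andbF /=.
have zjS : z \notin j :\: S by rewrite inE (negbTE zj) andbF.
rewrite cardsU1 zjS /= add1n exprS mulN1r.
by rewrite addNr.
Qed.

End RingPart1.

Section RingPart2.
Local Open Scope ring_scope.

Section Func.
Variables (R : realType) (n : nat) (G : rel 'I_n).
Hypothesis Gs : forall i j, G i j = G j i.
Hypothesis Gi : forall i, ~~ G i i.
Hypothesis Gtri : forall a b c, G a b -> G b c -> G a c -> False.

Definition Om2 x := [set T : {set 'I_n} | (T \subset Nb G x) && (1 < #|T|)%N].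

Variable beta : 'I_n -> {set 'I_n} -> R.

Definition delta x (T : {set 'I_n}) : R :=
  \sum_(S in Om2 x | S \subset T) beta x S * (-1) ^+ #|T :\: S|.

Lemma local_sum x (L : {set 'I_n}) : L \subset Nb G x ->
  \sum_(T in Om2 x) delta x T * (T \subset L)%:R =
  (if (1 < #|L|)%N then beta x L else 0).
Proof.
move=> LN.
rewrite /delta.
under eq_bigr do rewrite mulr_suml.
rewrite (exchange_big_dep (fun S : {set 'I_n} => S \in Om2 x)) /=; last by move=> T S _ /andP[].
under eq_bigr => S SO.
  rewrite (eq_bigl (fun T : {set 'I_n} => (S \subset T) && (T \in Om2 x))); last by move=> T; rewrite SO andbC.
  rewrite big_mkcondr /=.
  under eq_bigr => T ST.
    have -> : (if T \in Om2 x then beta x S * (-1) ^+ #|T :\: S| * (T \subset L)%:R else 0)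
        = beta x S * (if T \subset L then (-1) ^+ #|T :\: S| else 0).
      case: (boolP (T \subset L)) => TL; last by rewrite mulr0 if_same mulr0.
      have -> : T \in Om2 x.
        move: SO; rewrite !inE => /andP[_ S2]; rewrite (subset_trans TL LN) /=.
        exact: leq_trans S2 (subset_leq_card ST).
      by rewrite mulr1.
    over.
  rewrite -mulr_sumr -big_mkcondr /= mobius.
  over.
rewrite /=.
case: ifP => L2.
  have LO : L \in Om2 x by rewrite inE LN L2.
  rewrite (bigD1 L) //= eqxx mulr1 big1 ?addr0 // => S /andP[_ /negbTE ->].
  by rewrite mulr0.
rewrite big1 // => S SO; case: eqP => [eSL|]; last by rewrite mulr0.
by move: SO; rewrite eSL inE L2 andbF.
Qed.

Definition gam : {ffun cim_index n -> R} :=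
  [ffun Z => \sum_x \sum_(T in Om2 x) (if x |: T == val Z then delta x T else 0)].

Lemma Om2_card x T : T \in Om2 x -> (1 < #|x |: T|)%N.
Proof.
rewrite inE => /andP[_ T2]; apply: leq_trans T2 _.
exact: subset_leq_card (subsetUr _ _).
Qed.

Lemma dotp_gam D : has_skeleton D G ->
  dotp gam (char_imset R D) =
  \sum_x (if (1 < #|data D x|)%N then beta x (data D x) else 0).
Proof.
move=> sk; rewrite /dotp.
under eq_bigr do rewrite ffunE mulr_suml.
rewrite exchange_big /=; apply: eq_bigr => x _.
under eq_bigr do rewrite mulr_suml.
rewrite exchange_big /=.
rewrite -(local_sum (@data_sub _ _ Gs D x sk)).
apply: eq_bigr => T TO.
pose Z0 : cim_index n := exist _ (x |: T) (Om2_card TO).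
rewrite (bigD1 Z0) //= eqxx big1 ?addr0; last first.
  move=> Z /negbTE nZ; case: eqP => [eZ|]; last by rewrite mul0r.
  have eZZ : Z = Z0 by apply: val_inj; rewrite /= -eZ.
  by rewrite eZZ eqxx in nZ.
rewrite ffunE /= (cim_local Gs Gi Gtri) //.
by move: (TO); rewrite inE => /andP[].
by move: (TO); rewrite inE => /andP[].
Qed.

End Func.

End RingPart2.

Section RingPart3.
Local Open Scope ring_scope.

Section Edge.
Variables (R : realType) (n : nat) (G : rel 'I_n).
Hypothesis Gs : forall i j, G i j = G j i.
Hypothesis Gi : forall i, ~~ G i i.
Hypothesis Gtri : forall a b c, G a b -> G b c -> G a c -> False.

Notation V := (@CIM_points R n G).

Lemma imset_bvec D : char_imset R D = bvec R (fun S : cim_index n => cim_value D (val S)).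
Proof. by apply/ffunP => S; rewrite !ffunE. Qed.

Lemma V_vertex p : V p -> poly_vertex V p.
Proof.
move=> Vp; case: (Vp) => D [dD sD eD]; rewrite eD imset_bvec; apply: bvec_vertex.
  by move=> w [W [_ _ ->]]; eexists; apply: imset_bvec.
by rewrite -imset_bvec; exists D.
Qed.

Lemma imset_eq D1 D2 : has_skeleton D1 G -> has_skeleton D2 G ->
  (forall x, data D1 x = data D2 x) -> char_imset R D1 = char_imset R D2.
Proof.
move=> s1 s2 ed; apply/ffunP => S; rewrite !ffunE.
by rewrite (cim_eq s1 s2 ed (valP S)).
Qed.

Section Alpha.
Variables (a c : {set 'I_n}).
Definition alpha (L : {set 'I_n}) : R := (L == a)%:R + ((L == c) && (a != c))%:R.

Lemma alpha_le1 L : alpha L <= 1.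
Proof.
rewrite /alpha; case: (eqVneq L a) => [->|_] /=; first by rewrite andbN /=; lra.
by case: (_ && _) => /=; lra.
Qed.

Lemma alpha_eq1 L : alpha L = 1 <-> L = a \/ L = c.
Proof.
rewrite /alpha; split.
  case: (eqVneq L a) => [->|_]; first by left.
  case: (eqVneq L c) => [->|_]; first by right.
  by rewrite /= mulr0n addr0 => /esym/eqP; rewrite oner_eq0.
case=> ->; rewrite eqxx /=.
  by case: (eqVneq a c) => /= _; rewrite ?andbF /=; lra.
case: (eqVneq a c) => [eac|nac]; first by rewrite /= mulr1n mulr0n addr0.
by rewrite /= mulr1n mulr0n add0r.
Qed.
End Alpha.


Lemma edge_AC A C : is_dag A -> has_skeleton A G -> is_dag C -> has_skeleton C G ->
  char_imset R A <> char_imset R C ->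
  (forall W, is_dag W -> has_skeleton W G ->
     (forall x, data W x = data A x \/ data W x = data C x) ->
     (forall x, data W x = data A x) \/ (forall x, data W x = data C x)) ->
  poly_edge V (char_imset R A) (char_imset R C).
Proof.
move=> dA sA dC sC ne H.
have VA : V (char_imset R A) by exists A.
have VC : V (char_imset R C) by exists C.
pose al x := alpha (data A x) (data C x).
pose be x S := al x S - al x set0.
have key : forall W, has_skeleton W G ->
    dotp (gam G be) (char_imset R W) = \sum_x al x (data W x) - \sum_x al x set0.
  move=> W sW; rewrite (dotp_gam Gs Gi Gtri be sW) -sumrB; apply: eq_bigr => x _.
  case: ifP => // h; case: (data_cases W x) => [->|[h' _]]; first by rewrite subrr.
  by rewrite h' in h.
have sumA : \sum_x al x (data A x) = \sum_(x : 'I_n) (1 : R).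
  by apply: eq_bigr => x _; apply/alpha_eq1; left.
have sumC : \sum_x al x (data C x) = \sum_(x : 'I_n) (1 : R).
  by apply: eq_bigr => x _; apply/alpha_eq1; right.
split; try exact: V_vertex.
  exact: ne.
exists (gam G be); split; first by rewrite !key // sumA sumC.
move=> w [W [dW sW ->]]; rewrite !key // sumA; split.
  by rewrite lerD2r; apply: ler_sum => x _; apply: alpha_le1.
move=> e; have e2 : \sum_x al x (data W x) = \sum_(x : 'I_n) (1 : R).
  by move: e => /(congr1 (fun z => z + \sum_x al x set0)); rewrite !subrK.
have each := sum_eq_le (fun x => alpha_le1 (data A x) (data C x) (data W x)) e2.
case: (H W dW sW (fun x => (alpha_eq1 _ _ _).1 (each x))) => eW.
  exists 1; split => [||i]; [lra | lra |].
  by rewrite (imset_eq sW sA eW) mul1r subrr mul0r addr0.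
exists 0; split => [||i]; [lra | lra |].
by rewrite (imset_eq sW sC eW) mul0r subr0 mul1r add0r.
Qed.

End Edge.

End RingPart3.

Section RingPart4.
Local Open Scope ring_scope.

Lemma wd_mono (R : realType) (I : finType) (V : {ffun I -> R} -> Prop) k u v :
  within_dist V k u v -> within_dist V k.+1 u v.
Proof.
elim: k u => [|k IH] u /= h; first by left.
case: h => [->|[w [e h]]]; first by left.
by right; exists w; split => //; apply: IH.
Qed.

Lemma min_set (T : finType) (P : {set T} -> Prop) Y : P Y ->
  exists Y0, P Y0 /\ forall Y', P Y' -> (#|Y0| <= #|Y'|)%N.
Proof.
move: {2}#|Y| (leqnn #|Y|) => m; elim: m Y => [|m IH] Y hY PY.
  by exists Y; split => // Y' _; move: hY; rewrite leqn0 => /eqP ->.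
case: (classic (exists Y', P Y' /\ (#|Y'| < #|Y|)%N)) => [[Y' [PY' lt]]|nex].
  by apply: (IH Y') => //; rewrite -ltnS; apply: leq_trans lt hY.
exists Y; split => // Y' PY'; rewrite leqNgt; apply/negP => lt.
by apply: nex; exists Y'.
Qed.

Section Main.
Variables (R : realType) (n : nat) (G : rel 'I_n).
Hypothesis Gs : forall i j, G i j = G j i.
Hypothesis Gi : forall i, ~~ G i i.
Hypothesis Gtri : forall a b c, G a b -> G b c -> G a c -> False.

Notation V := (@CIM_points R n G).

Lemma main_ind k : forall A B, is_dag A -> has_skeleton A G -> is_dag B -> has_skeleton B G ->
  (#|[set x | data A x != data B x]| <= k)%N ->
  within_dist V k (char_imset R A) (char_imset R B).
Proof.
elim: k => [|k IH] A B dA sA dB sB hX.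
  apply: (imset_eq R sA sB) => x; apply/eqP; apply/negPn/negP => nx.
  suff : (0 < #|[set x | data A x != data B x]|)%N by rewrite leqNgt in hX; rewrite (negbTE hX).
  by apply/card_gt0P; exists x; rewrite inE.
set X := [set x | data A x != data B x] in hX.
case: (eqVneq X set0) => [X0|Xne].
  left; apply: (imset_eq R sA sB) => x; apply/eqP; apply/negPn/negP => nx.
  have : x \in X by rewrite /X inE.
  by rewrite X0 inE.
pose P := fun Y : {set 'I_n} => [/\ Y \subset X, Y != set0 &
  exists C, [/\ is_dag C, has_skeleton C G &
     forall x, data C x = if x \in Y then data B x else data A x]].
have PX : P X.
  split => //; exists B; split => // x; case: ifP => // /negbT.
  by rewrite inE negbK => /eqP.
case: (min_set PX) => Y0 [[Y0X Y0ne [C [dC sC eC]]] minY].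
have IHC : within_dist V k (char_imset R C) (char_imset R B).
  apply: IH => //.
  have sub : [set x | data C x != data B x] \subset X :\: Y0.
    apply/subsetP => x; rewrite !inE eC; case: ifP => xY; first by rewrite eqxx.
    by move=> ->.
  apply: leq_trans (subset_leq_card sub) _.
  rewrite cardsD (setIidPr Y0X).
  have : (0 < #|Y0|)%N by rewrite card_gt0.
  by move: hX; lia.
case: (eqVneq (char_imset R A) (char_imset R C)) => [eAC|nAC].
  by rewrite eAC; apply: wd_mono.
right; exists (char_imset R C); split => //.
apply: (edge_AC Gs Gi Gtri dA sA dC sC); first by apply/eqP.
move=> W dW sW hW.
pose Y' := [set x in Y0 | data W x != data A x].
have cA : forall x, x \notin Y0 -> data C x = data A x.
  by move=> x xY; rewrite eC (negbTE xY).
case: (eqVneq Y' set0) => [Y'0|Y'ne].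
  left => x; case: (boolP (x \in Y0)) => xY.
    apply/eqP; apply/negPn/negP => nx.
    have : x \in Y' by rewrite inE xY nx.
    by rewrite Y'0 inE.
  by case: (hW x) => ->; rewrite ?cA.
have PY' : P Y'.
  split => //.
    apply: subset_trans Y0X; apply/subsetP => x; rewrite inE => /andP[].
    done.
  exists W; split => // x; rewrite inE; case: (boolP (x \in Y0)) => xY /=.
    case: (eqVneq (data W x) (data A x)) => // nx.
    case: (hW x) => ex; first by rewrite ex eqxx in nx.
    by rewrite ex eC xY.
  by case: (hW x) => ->; rewrite ?cA.
have eY : Y' = Y0.
  apply/eqP; rewrite eqEcard minY // andbT; apply/subsetP => x.
  by rewrite inE => /andP[].
right => x; case: (boolP (x \in Y0)) => xY.
  have : x \in Y' by rewrite eY.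
  rewrite inE xY /= => nx.
  by case: (hW x) => // ex; rewrite ex eqxx in nx.
by case: (hW x) => ->; rewrite ?cA.
Qed.

End Main.

End RingPart4.

Unset Implicit Arguments.

Theorem mainTheorem2 (R : realType) (n : nat) (G : rel 'I_n) :
  is_tree G -> diam_le (@CIM_points R n G) (internal_vertices G).
Proof.
move=> tr; have Gtri := tree_tri tr.
case: tr => _ [[Gs Gi] _].
move=> u v [[A [dA sA ->]] _] [[B [dB sB ->]] _].
apply: (@main_ind R n G Gs Gi Gtri _ A B) => //.
apply: subset_leq_card; apply/subsetP => x; rewrite !inE => nx.
rewrite /degree -/(Nb G x).
case: (data_cases A x) => [hA|[hA _]].
  case: (data_cases B x) => [hB|[hB _]]; first by rewrite hA hB eqxx in nx.
  exact: leq_trans hB (subset_leq_card (@data_sub _ _ Gs B x sB)).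
exact: leq_trans hA (subset_leq_card (@data_sub _ _ Gs A x sA)).
Qed.
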